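(* Let $p > 2$ be a prime and let $z \in \mathbb{Z}/p\mathbb{Z}$. Then there exist $x, y \in \mathbb{Z}/p\mathbb{Z}$ such that $x^2 + y^2 + z^2 - xyz \equiv 0 \pmod p$ if and only if either $z \notin \{2, -2\}$ or $-1$ is a quadratic residue modulo $p$. *)

(* Defs.v *)
From mathcomp Require Import all_boot all_algebra.
Set Implicit Arguments. Unset Strict Implicit. Unset Printing Implicit Defensive.
Import GRing.Theory.
Local Open Scope ring_scope.

Definition quad_res (p : nat) (a : 'F_p) : Prop :=
  a != 0 /\ exists w : 'F_p, w ^+ 2 = a.

(* Main.v *)
Require Import Defs.
From mathcomp Require Import all_boot all_algebra all_field.
From mathcomp Require Import ring.
Import GRing.Theory.
Local Open Scope ring_scope.

Lemma sq_card (F : finFieldType) : (#|F| <= 2 * #|[set x ^+ 2 | x : F]|)%N.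
Proof.
set S := [set x ^+ 2 | x : F].
pose r (a : F) := odflt 0 [pick x | x ^+ 2 == a].
have rP x : r (x ^+ 2) ^+ 2 = x ^+ 2.
  rewrite /r; case: pickP => [y /eqP //|/(_ x)]; by rewrite eqxx.
pose f := fun x : F => (x ^+ 2, x == r (x ^+ 2)).
have inj : injective f.
  move=> x y [exy]; rewrite exy; set t := r (y ^+ 2) => eb.
  have hx : (x == t) || (x == - t) by rewrite -eqf_sqr /t rP exy.
  have hy : (y == t) || (y == - t) by rewrite -eqf_sqr /t rP.
  case: (eqVneq x t) eb hx => [->|nx] eb hx.
    by move/esym: eb => /eqP.
  case: (eqVneq y t) eb hy => [->|ny] // _ hy.
  by move: hx hy => /= /eqP -> /eqP ->.
have : (#|[set f x | x : F]| <= #|setX S [set: bool]|)%N.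
  apply: subset_leq_card; apply/subsetP => _ /imsetP [x _ ->].
  by rewrite in_setX in_setT andbT; apply/imsetP; exists x.
by rewrite card_imset // cardsX cardsT card_bool mulnC.
Qed.
Lemma sum_sq (F : finFieldType) (c d : F) : odd #|F| -> d != 0 ->
  exists u y : F, u ^+ 2 = c - d * y ^+ 2.
Proof.
move=> oF dn0.
set S := [set x ^+ 2 | x : F].
set B := [set c - d * s | s in S].
have cB : #|B| = #|S|.
  apply: card_in_imset => s t _ _ /eqP; rewrite (inj_eq (addrI c)) eqr_opp.
  by rewrite (inj_eq (mulfI dn0)) => /eqP.
have hS := sq_card F.
have lt : (#|F| < 2 * #|S|)%N.
  rewrite ltn_neqAle hS andbT; apply/negP => /eqP e.
  by move: oF; rewrite e oddM.
have : S :&: B != set0.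
  apply/negP => /eqP e0.
  have := cardsUI S B; rewrite e0 cards0 addn0 cB addnn -mul2n => e1.
  by move: (max_card (S :|: B)); rewrite e1 leqNgt lt.
case/set0Pn => _ /setIP [/imsetP [u _ ->] /imsetP [_ /imsetP [y _ ->] e]].
by exists u, y.
Qed.

Theorem lemma1 (p : nat) (hp : prime p) (hp2 : (2 < p)%N) (z : 'F_p) :
  (exists x y : 'F_p, x ^+ 2 + y ^+ 2 + z ^+ 2 - x * y * z = 0) <->
  ((z != 2%:R /\ z != - 2%:R) \/ quad_res (- 1 : 'F_p)).
Proof.
have two0 : (2%:R : 'F_p) != 0.
  apply/eqP => /(congr1 (@nat_of_ord _)); rewrite (val_Fp_nat hp) modn_small //.
have four0 : (2%:R ^+ 2 : 'F_p) != 0 by rewrite expf_neq0.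
have oF : odd #|'F_p|.
  by rewrite card_Fp //; case: (even_prime hp) => // p2; rewrite p2 in hp2.
have m10 : (-1 : 'F_p) != 0 by rewrite oppr_eq0 oner_eq0.
split.
- case=> x [y E].
  case: (eqVneq z 2%:R) => [z2|nz2].
    right; split => //; exists ((x - y) / 2%:R).
    have h : (x - y) ^+ 2 + 2%:R ^+ 2 = 0 by rewrite -E z2; ring.
    rewrite expr_div_n; apply: (mulIf four0); rewrite mulfVK //.
    by move/eqP: h; rewrite addr_eq0 => /eqP ->; ring.
  case: (eqVneq z (- 2%:R)) => [z2|nz2']; last by left.
  right; split => //; exists ((x + y) / 2%:R).
  have h : (x + y) ^+ 2 + 2%:R ^+ 2 = 0 by rewrite -E z2; ring.
  rewrite expr_div_n; apply: (mulIf four0); rewrite mulfVK //.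
  by move/eqP: h; rewrite addr_eq0 => /eqP ->; ring.
- case=> [[nz2 nz2']|[_ [w hw]]]; last first.
    exists (z * w), 0; rewrite exprMn hw; ring.
  have d0 : (2%:R ^+ 2 - z ^+ 2 : 'F_p) != 0.
    rewrite subr_eq0 eqf_sqr negb_or eq_sym nz2 /=.
    by apply: contra nz2' => /eqP ->; rewrite opprK.
  have [u [y hu]] := @sum_sq _ (- (2%:R ^+ 2 * z ^+ 2)) _ oF d0.
  exists ((u + z * y) / 2%:R), y.
  set x := (u + z * y) / 2%:R.
  have hx : 2%:R * x = u + z * y by rewrite mulrC divfK.
  apply: (mulfI four0); rewrite mulr0.
  have -> : 2%:R ^+ 2 * (x ^+ 2 + y ^+ 2 + z ^+ 2 - x * y * z) =
    (2%:R * x - z * y) ^+ 2 + (2%:R ^+ 2 - z ^+ 2) * y ^+ 2 + 2%:R ^+ 2 * z ^+ 2 by ring.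
  by rewrite hx addrK hu; ring.
Qed.
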